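(* Let $S=s_1,\ldots,s_n$ be a sequence of positive real numbers, $\gamma>0$, $k$ a positive integer and $\epsilon>0$, and let $\Omega=\max_i s_i$ and $\omega=\min_i s_i$. The computational complexity of $\textit{ApproxExp}(S,\gamma,k,\epsilon)$ is $O(\epsilon^{-2}nk^3\log^2(\Omega/\omega))$.
   Context: A level sequence is $L=\ell_1,\ldots,\ell_n$ of integers with $0\le\ell_i\le k$; set $\ell_0=0$. The penalty is $\mathrm{pen}(x,y)=\max(y-x,0)\,\gamma\log n$; $p_{\exp}(s;\lambda)=\lambda e^{-\lambda s}$; $\mathrm{score}_{\exp}(L,S;\alpha,\beta,\gamma)=\sum_{i=1}^n\big[-\log p_{\exp}(s_i;\beta\alpha^{\ell_i})+\mathrm{pen}(\ell_{i-1},\ell_i)\big]$. $\textit{Viterbi}(S,\alpha,\beta,\gamma,k,p_{\exp})$ is a dynamic program returning a level sequence minimizing this score for fixed $\alpha,\beta$ in $O(nk)$ time. Algorithm $\textit{ExpAlpha}(S,\alpha,\gamma,k,\epsilon)$: let $\mu=\frac1n\sum_i s_i$ and $\beta=1/\mu$; while $\beta\ge1/(\alpha^k\mu)$: run $\textit{Viterbi}(S,\alpha,\beta,\gamma,k,p_{\exp})$ and set $\beta\leftarrow\beta/(1+\epsilon)$; return the best tested $(L,\beta)$. Algorithm $\textit{ApproxExp}(S,\gamma,k,\epsilon)$: let $\alpha=(\max_i s_i)/(\min_i s_i)$ and $c=(1+\epsilon)^{1/(2k)}$; while $\alpha\ge1$: run $\textit{ExpAlpha}(S,\alpha,\gamma,k,\epsilon/2)$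 and set $\alpha\leftarrow\alpha/c$. Return the best observed solution. *)

(* Defs.v *)
From Stdlib Require Import Reals Lra List.
Open Scope R_scope.

(* Cost model (unit-cost RAM on reals):
   - one call Viterbi(S,alpha,beta,gamma,k,p_exp) costs n*(k+1) units (the O(nk)
     dynamic program over levels 0..k), which also pays for computing the
     score of the returned sequence and comparing it with the best so far;
   - computing mu in ExpAlpha costs n units; computing max/min of S in
     ApproxExp costs n units;
   - all other scalar operations are free (they are O(1) per iteration and
     dominated by the Viterbi call of that iteration). *)

(* Generic while loop: [while cond x do (body x); x <- step x], returning the
   total cost of the executed bodies; [fuel] bounds the number of loop tests;
   [None] means the fuel ran out (or a nested loop ran out of fuel). *)
Fixpoint while_cost {A : Type} (fuel : nat) (cond : A -> bool) (step : A -> A)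
    (body : A -> option nat) (x : A) : option nat :=
  match fuel with
  | O => None
  | S f =>
      if cond x then
        match body x, while_cost f cond step body (step x) with
        | Some a, Some b => Some (a + b)%nat
        | _, _ => None
        end
      else Some 0%nat
  end.

Definition Rgeb (x y : R) : bool := if Rle_dec y x then true else false.

Definition seq_sum (S : list R) : R := fold_right Rplus 0 S.
Definition mean (S : list R) : R := seq_sum S / INR (length S).
Definition smax (S : list R) : R := fold_right Rmax (hd 0 S) S.
Definition smin (S : list R) : R := fold_right Rmin (hd 0 S) S.

Definition viterbi_cost (n k : nat) : nat := (n * (k + 1))%nat.

Definition exp_alpha_cost (fuel : nat) (S : list R) (alpha : R) (gamma : R)
    (k : nat) (eps : R) : option nat :=
  let n := length S in
  let mu := mean S in
  option_map (fun c => (n + c)%nat)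
    (while_cost fuel
       (fun beta => Rgeb beta (1 / (alpha ^ k * mu)))
       (fun beta => beta / (1 + eps))
       (fun _ => Some (viterbi_cost n k))
       (1 / mu)).

Definition approx_exp_cost (fuel : nat) (S : list R) (gamma : R) (k : nat)
    (eps : R) : option nat :=
  let n := length S in
  let c := Rpower (1 + eps) (1 / (2 * INR k)) in
  option_map (fun t => (n + t)%nat)
    (while_cost fuel
       (fun alpha => Rgeb alpha 1)
       (fun alpha => alpha / c)
       (fun alpha => exp_alpha_cost fuel S alpha gamma k (eps / 2))
       (smax S / smin S)).

(* Main.v *)
Require Import Defs.
From Stdlib Require Import Reals Lra List.
From Stdlib Require Import ZArith Lia.
Open Scope R_scope.

Lemma while_geom (body : R -> option nat) (t r X : R) (B : nat) :
  0 < t -> 1 < r ->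
  (forall y, t <= y -> y <= X -> exists b, body y = Some b /\ (b <= B)%nat) ->
  forall m x fuel, x < t * r ^ m -> x <= X -> (m < fuel)%nat ->
  exists c, while_cost fuel (fun y => Rgeb y t) (fun y => y / r) body x = Some c
            /\ (c <= m * B)%nat.
Proof.
  intros Ht Hr Hb m. induction m as [|m IH]; intros x fuel Hx HX Hf.
  - destruct fuel as [|f]; [lia|]. simpl. unfold Rgeb.
    destruct (Rle_dec t x); [simpl in Hx; lra|]. exists 0%nat; split; auto.
  - destruct fuel as [|f]; [lia|]. simpl. unfold Rgeb at 1.
    destruct (Rle_dec t x) as [Htx|Htx].
    + destruct (Hb x Htx HX) as [b [Hbx Hbb]]. rewrite Hbx.
      assert (Hlt : x / r < t * r ^ m).
      { replace (t * r ^ m) with ((t * (r * r ^ m)) * / r) by (field; lra).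
        unfold Rdiv. apply Rmult_lt_compat_r; [apply Rinv_0_lt_compat; lra|].
        simpl in Hx. exact Hx. }
      assert (Hle : x / r <= X).
      { apply Rle_trans with x; [|exact HX].
        apply Rmult_le_reg_r with r; [lra|].
        unfold Rdiv. rewrite Rmult_assoc, Rinv_l by lra. nra. }
      destruct (IH (x / r) f Hlt Hle ltac:(lia)) as [c [Hc Hcb]].
      rewrite Hc. exists (b + c)%nat. split; auto. simpl. lia.
    + exists 0%nat; split; auto. lia.
Qed.

Lemma nat_ceil (y : R) : 0 <= y -> exists m : nat, y < INR m /\ INR m <= y + 1.
Proof.
  intros Hy. destruct (archimed y) as [H1 H2].
  exists (Z.to_nat (up y)). rewrite INR_IZR_INZ, Z2Nat.id.
  - lra.
  - apply le_IZR. simpl. lra.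
Qed.

Lemma ln_lower (x : R) : 0 < x -> x <= 1 -> x / 2 <= ln (1 + x).
Proof.
  intros H0 H1.
  set (y := / (1 + x) - 1).
  assert (Hy : y <> 0).
  { unfold y. intro E. assert (/ (1 + x) = 1) by lra.
    assert (1 + x = 1). { rewrite <- (Rinv_inv (1+x)). rewrite H. apply Rinv_1. }
    lra. }
  pose proof (exp_ineq1 y Hy) as He.
  assert (Hl : ln (/ (1 + x)) < y).
  { rewrite <- (ln_exp y). apply ln_increasing.
    - apply Rinv_0_lt_compat; lra.
    - unfold y in *. lra. }
  rewrite ln_Rinv in Hl by lra.
  assert (Hy2 : y <= - x / 2).
  { unfold y. apply Rmult_le_reg_r with (1 + x); [lra|].
    rewrite Rmult_minus_distr_r, Rinv_l by lra. nra. }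
  lra.
Qed.

Lemma fold_min_pos (S : list R) (d : R) :
  0 < d -> Forall (fun s => 0 < s) S -> 0 < fold_right Rmin d S.
Proof.
  intros Hd HS. induction HS; simpl; auto.
  apply Rmin_glb_lt; auto.
Qed.

Lemma smin_pos (S : list R) :
  S <> nil -> Forall (fun s => 0 < s) S -> 0 < smin S.
Proof.
  intros Hn HS. unfold smin. apply fold_min_pos; auto.
  destruct S as [|a l]; [congruence|]. simpl. inversion HS; auto.
Qed.

Lemma sum_pos (S : list R) :
  S <> nil -> Forall (fun s => 0 < s) S -> 0 < seq_sum S.
Proof.
  intros Hn HS. induction HS as [|x l Hx Hl IH]; [congruence|].
  unfold seq_sum in *; simpl.
  destruct l as [|a l']. - simpl. lra.
  - assert (0 < fold_right Rplus 0 (a :: l')) by (apply IH; discriminate). lra.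
Qed.

Lemma mean_pos (S : list R) :
  S <> nil -> Forall (fun s => 0 < s) S -> 0 < mean S.
Proof.
  intros Hn HS. unfold mean. apply Rdiv_lt_0_compat.
  - apply sum_pos; auto.
  - apply lt_0_INR. destruct S; [congruence|]. simpl; lia.
Qed.

Theorem proposition9 :
  exists C : R, 0 < C /\
  forall (S : list R) (gamma : R) (k : nat) (eps : R),
    S <> nil ->
    Forall (fun s => 0 < s) S ->
    0 < gamma ->
    (0 < k)%nat ->
    0 < eps -> eps <= 1 ->
    2 * smin S <= smax S ->
    exists (fuel c : nat),
      approx_exp_cost fuel S gamma k eps = Some c /\
      INR c <= C * (/ eps ^ 2 * INR (length S) * INR k ^ 3
                    * ln (smax S / smin S) ^ 2).
Proof.
  exists 100. split; [lra|].
  intros S gamma k eps Hne HS Hg Hk He0 He1 Hsm.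
  pose proof (smin_pos S Hne HS) as Hmin.
  pose proof (mean_pos S Hne HS) as Hmu.
  set (n := length S). set (A0 := smax S / smin S). set (L := ln A0).
  set (mu := mean S). assert (Hmu2 : 0 < mu) by exact Hmu.
  assert (HA0 : 2 <= A0).
  { unfold A0. apply Rmult_le_reg_r with (smin S); [lra|].
    unfold Rdiv. rewrite Rmult_assoc, Rinv_l by lra. lra. }
  assert (HL : / 2 < L).
  { unfold L. apply Rlt_le_trans with (ln 2); [apply ln_lt_2|].
    destruct (Req_dec A0 2) as [E|E]; [rewrite E; lra|].
    left. apply ln_increasing; lra. }
  assert (HkR : 1 <= INR k) by (apply (le_INR 1); lia).
  set (r := 1 + eps / 2).
  set (lr := ln r).
  assert (Hlr : eps / 4 <= lr).
  { unfold lr, r. pose proof (ln_lower (eps/2)). lra. }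
  set (le1 := ln (1 + eps)).
  assert (Hle1 : eps / 2 <= le1) by (apply ln_lower; lra).
  destruct (nat_ceil (INR k * L / lr)) as [mi [Hmi1 Hmi2]].
  { apply Rle_ge in HkR. unfold Rdiv; apply Rmult_le_pos; [nra|left; apply Rinv_0_lt_compat; lra]. }
  destruct (nat_ceil (2 * INR k * L / le1)) as [mo [Hmo1 Hmo2]].
  { unfold Rdiv; apply Rmult_le_pos; [nra|left; apply Rinv_0_lt_compat; lra]. }
  set (cv := Rpower (1 + eps) (1 / (2 * INR k))).
  assert (Hlcv : ln cv = le1 / (2 * INR k)).
  { unfold cv, Rpower. rewrite ln_exp. unfold le1. field. lra. }
  assert (Hcv : 1 < cv).
  { assert (Hp : 0 < 1 / (2 * INR k) * ln (1 + eps)).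
    { apply Rmult_lt_0_compat; [apply Rdiv_lt_0_compat; lra|]. fold le1; lra. }
    unfold cv, Rpower. rewrite <- exp_0 at 1. apply exp_increasing. exact Hp. }
  set (B := (n + mi * (n * (k + 1)))%nat).
  assert (Hin : forall fuel alpha, (mi < fuel)%nat -> 1 <= alpha -> alpha <= A0 ->
     exists c, exp_alpha_cost fuel S alpha gamma k (eps / 2) = Some c /\ (c <= B)%nat).
  { intros fuel alpha Hf Ha1 Ha2.
    assert (Hak : 0 < alpha ^ k) by (apply pow_lt; lra).
    assert (Hpow : alpha ^ k < r ^ mi).
    { apply Rle_lt_trans with (A0 ^ k); [apply pow_incr; lra|].
      rewrite <- (Rpower_pow k A0) by lra. rewrite <- (Rpower_pow mi r) by (unfold r; lra).
      unfold Rpower. apply exp_increasing. fold L. fold lr.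
      assert (0 < lr) by lra.
      apply Rmult_lt_compat_r with (r := lr) in Hmi1; [|lra].
      unfold Rdiv in Hmi1. rewrite Rmult_assoc, Rinv_l in Hmi1 by lra. lra. }
    unfold exp_alpha_cost. fold n. fold mu.
    destruct (while_geom (fun _ => Some (viterbi_cost n k)) (1 / (alpha ^ k * mu))
                r (1 / mu) (viterbi_cost n k)) with (m := mi) (x := 1 / mu) (fuel := fuel)
      as [c [Hc Hcb]].
    - apply Rdiv_lt_0_compat; [lra|]. apply Rmult_lt_0_compat; lra.
    - unfold r; lra.
    - intros y _ _. exists (viterbi_cost n k). split; auto.
    - replace (1 / (alpha ^ k * mu) * r ^ mi) with ((1 / mu) * (r ^ mi / alpha ^ k))
        by (field; lra).
      rewrite <- (Rmult_1_r (1 / mu)) at 1.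
      apply Rmult_lt_compat_l; [apply Rdiv_lt_0_compat; lra|].
      apply Rmult_lt_reg_r with (alpha ^ k); [lra|].
      unfold Rdiv. rewrite Rmult_assoc, Rinv_l by lra. lra.
    - lra.
    - exact Hf.
    - fold r. rewrite Hc. simpl. exists (n + c)%nat. split; auto.
      unfold B. unfold viterbi_cost in Hcb. lia. }
  set (fuel := Datatypes.S (Nat.max mi mo)).
  destruct (while_geom (fun alpha => exp_alpha_cost fuel S alpha gamma k (eps / 2))
              1 cv A0 B) with (m := mo) (x := A0) (fuel := fuel) as [c [Hc Hcb]].
  - lra.
  - exact Hcv.
  - intros y Hy1 Hy2. apply Hin; auto. unfold fuel; lia.
  - rewrite Rmult_1_l. rewrite <- (Rpower_pow mo cv) by lra.
    rewrite <- (exp_ln A0) by lra. unfold Rpower. apply exp_increasing.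
    rewrite Hlcv. fold L.
    assert (0 < le1) by lra.
    apply Rmult_lt_compat_r with (r := le1 / (2 * INR k)) in Hmo1;
      [|apply Rdiv_lt_0_compat; lra].
    replace (2 * INR k * L / le1 * (le1 / (2 * INR k))) with L in Hmo1 by (field; lra).
    lra.
  - lra.
  - unfold fuel; lia.
  - exists fuel, (n + c)%nat. split.
    + unfold approx_exp_cost. fold n. fold cv. fold A0. rewrite Hc. reflexivity.
    +
      assert (HcR : INR (n + c) <= INR n + INR mo * (INR n + INR mi * (INR n * (INR k + 1)))).
      { apply Rle_trans with (INR (n + mo * B)).
        - apply le_INR. lia.
        - unfold B. rewrite !plus_INR, !mult_INR, !plus_INR, !mult_INR, plus_INR. simpl. lra. }
      fold A0. fold L.
      set (Xv := INR k * L / eps).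
      assert (HX : / 2 <= Xv).
      { unfold Xv. apply Rmult_le_reg_r with eps; [lra|].
        unfold Rdiv. rewrite Rmult_assoc, Rinv_l by lra. nra. }
      assert (Hmi : INR mi <= 4 * Xv + 1).
      { apply Rle_trans with (INR k * L / lr + 1); [lra|].
        apply Rplus_le_compat_r. unfold Xv.
        unfold Rdiv. apply Rle_trans with (INR k * L * / (eps / 4)).
        - apply Rmult_le_compat_l; [nra|]. apply Rinv_le_contravar; lra.
        - right. field. lra. }
      assert (Hmo : INR mo <= 4 * Xv + 1).
      { apply Rle_trans with (2 * INR k * L / le1 + 1); [lra|].
        apply Rplus_le_compat_r. unfold Xv.
        unfold Rdiv. apply Rle_trans with (2 * INR k * L * / (eps / 2)).
        - apply Rmult_le_compat_l; [nra|]. apply Rinv_le_contravar; lra.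
        - right. field. lra. }
      assert (Hn : 0 <= INR n) by apply pos_INR.
      assert (Hmi0 : 0 <= INR mi) by apply pos_INR.
      assert (Hmo0 : 0 <= INR mo) by apply pos_INR.
      replace (/ eps ^ 2 * INR n * INR k ^ 3 * L ^ 2) with (INR n * INR k * (Xv * Xv))
        by (unfold Xv; field; lra).
      apply Rle_trans with (INR n + (6 * Xv) * (INR n + (6 * Xv) * (INR n * (2 * INR k)))).
      * apply Rle_trans with (1 := HcR).
        apply Rplus_le_compat_l.
        apply Rmult_le_compat; [lra| |lra|].
        { apply Rplus_le_le_0_compat; [lra|]. apply Rmult_le_pos; [lra|]. nra. }
        apply Rplus_le_compat_l.
        apply Rmult_le_compat; [lra|nra|lra|]. apply Rmult_le_compat_l; lra.
      * assert (HXX : 1/4 <= Xv * Xv) by nra.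
        assert (h1 : INR n <= 4 * (INR n * (Xv * Xv))) by nra.
        assert (h2 : INR n * Xv <= 2 * (INR n * (Xv * Xv))) by nra.
        assert (h0 : 0 <= INR n * (Xv * Xv)) by nra.
        assert (h3 : INR n * (Xv * Xv) <= INR n * INR k * (Xv * Xv)).
        { rewrite <- (Rmult_1_r (INR n)) at 1. nra. }
        assert (h4 : INR n * INR k * Xv * Xv = INR n * INR k * (Xv * Xv)) by ring.
        nra.
Qed.
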